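(* Let $K=\mathbb{C}_p$ with residue field $k$, let $F$ be a restricted lift of $p$-th power and let $\bar F$ be its reduction. Then the reduction map $\mathrm{red}$ restricted to $\mathrm{Per}(F)$ is a bijection from $\mathrm{Per}(F)$ onto $\mathrm{Per}(\bar F)$.
   Context: $K=\mathbb{C}_p$ with absolute value $|\cdot|$, valuation ring $K^\circ$, maximal ideal $K^{\circ\circ}$, residue field $k=K^\circ/K^{\circ\circ}$ (algebraically closed). A restricted lift of $p$-th power is a morphism $F=(F_1,\dots,F_N)$ of $\mathbb{A}^N_K$ with $F_i\in K^\circ[X_1,\dots,X_N]$ such that there exist $\varpi\in K^\circ$ with $|p|\le|\varpi|<1$ and $G_i\in K^\circ[X_1,\dots,X_N]$ with $F_i\equiv G_i^p\pmod\varpi$, and such that $F$ maps $K^N\setminus(K^\circ)^N$ into itself with $\max_i|F_i(x)|>\max_i|x_i|$ there. $\bar F=(\bar F_1,\dots,\bar F_N)$ where $\bar F_i$ is obtained from $F_i$ by reducing coefficients modulo $K^{\circ\circ}$. The reduction map $\mathrm{red}:K^N\to k^N\cup\{\infty\}$ sends $x\in(K^\circ)^N$ to its coordinatewise reduction and points outside $(K^\circ)^N$ to $\infty$. $\mathrm{Per}(F)\subseteq K^N$ and $\mathrm{Per}(\bar F)\subseteq k^N$ are the sets of points fixed by some iterate. *)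

(* Defs.v *)
From HB Require Import structures.
From mathcomp Require Import all_boot all_order all_algebra.
From mathcomp Require Import reals.
From mathcomp Require Import mpoly.

Set Implicit Arguments.
Unset Strict Implicit.
Unset Printing Implicit Defensive.

Import Order.TTheory GRing.Theory Num.Theory.
Local Open Scope ring_scope.

Section Defs.
Variables (R : realType) (K : fieldType).

Definition nonarch_abs (v : K -> R) : Prop :=
  [/\ forall x, 0 <= v x,
      forall x, v x = 0 <-> x = 0,
      forall x y, v (x * y) = v x * v y &
      forall x y, v (x + y) <= Num.max (v x) (v y)].

Definition abs_complete (v : K -> R) : Prop :=
  forall u : nat -> K,
    (forall e : R, 0 < e -> exists M, forall m n, (M <= m)%N -> (M <= n)%N ->
        v (u m - u n) < e) ->
    exists l : K, forall e : R, 0 < e -> exists M, forall n, (M <= n)%N ->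
        v (u n - l) < e.

Definition algebraic_over_Q (x : K) : Prop :=
  exists q : {poly rat}, q != 0 /\ root (map_poly (@ratr K) q) x.

(* (K, v) is (isometrically isomorphic to) C_p: an algebraically closed
   complete non-archimedean valued field of characteristic 0 with
   |p| = 1/p in which the algebraic closure of Q is dense. *)
Definition is_Cp (p : nat) (v : K -> R) : Prop :=
  [/\ prime p,
      [pchar K] =i pred0,
      (forall P : {poly K}, (1 < size P)%N -> exists z, root P z),
      nonarch_abs v &
   [/\ abs_complete v,
      v (p%:R) = (p%:R)^-1 &
      forall x (e : R), 0 < e -> exists y, algebraic_over_Q y /\ v (x - y) < e]].

Definition in_Ko (v : K -> R) (x : K) : Prop := v x <= 1.

(* (k, r) is the residue field K°/K°° : r restricted to K° is a surjective
   ring morphism onto k with kernel K°° = {x | v x < 1} *)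
Definition is_residue_map (v : K -> R) (k : fieldType) (r : K -> k) : Prop :=
  [/\ forall x y, in_Ko v x -> in_Ko v y -> r (x + y) = r x + r y,
      forall x y, in_Ko v x -> in_Ko v y -> r (x * y) = r x * r y,
      r 1 = 1,
      forall x, in_Ko v x -> (r x = 0 <-> v x < 1) &
      forall y : k, exists x, in_Ko v x /\ r x = y].

Variable N : nat.

Definition poly_Ko (v : K -> R) (P : {mpoly K[N]}) : Prop :=
  forall m, in_Ko v P@_m.

Definition polymap (L : ringType) (F : 'I_N -> {mpoly L[N]}) (x : 'I_N -> L)
  : 'I_N -> L := fun i => (F i).@[x].

Definition point_Ko (v : K -> R) (x : 'I_N -> K) : Prop :=
  forall i, in_Ko v (x i).

Definition maxabs (v : K -> R) (x : 'I_N -> K) : R := \big[Num.max/0]_i v (x i).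

Definition restricted_lift (p : nat) (v : K -> R) (F : 'I_N -> {mpoly K[N]})
  : Prop :=
  [/\ forall i, poly_Ko v (F i),
      (exists (w : K) (G : 'I_N -> {mpoly K[N]}),
         [/\ v (p%:R) <= v w, v w < 1, forall i, poly_Ko v (G i) &
             (* F_i = G_i^p mod w K°[X] *)
             forall i m, v ((F i - G i ^+ p)@_m) <= v w]) &
      forall x, ~ point_Ko v x ->
        ~ point_Ko v (polymap F x) /\ maxabs v x < maxabs v (polymap F x)].

Definition red_poly (k : fieldType) (r : K -> k) (P : {mpoly K[N]}) : {mpoly k[N]} :=
  \sum_(m <- msupp P) r P@_m *: 'X_[m].

(* reduction map K^N -> k^N u {oo} ; None stands for oo *)
Definition red (v : K -> R) (k : fieldType) (r : K -> k) (x : 'I_N -> K)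
  : option ('I_N -> k) :=
  if [forall i, v (x i) <= 1] then Some (fun i => r (x i)) else None.
End Defs.

Definition Per (T : Type) (f : T -> T) (x : T) : Prop :=
  exists n, (0 < n)%N /\ iter n f x = x.

(* Main.v *)
Require Import Defs.
From HB Require Import structures.
From mathcomp Require Import all_boot all_order all_algebra.
From mathcomp Require Import reals.
From mathcomp Require Import mpoly.
From mathcomp Require Import lra.
From Stdlib Require Import FunctionalExtensionality.
Import Order.TTheory GRing.Theory Num.Theory.
Set Implicit Arguments.
Unset Strict Implicit.
Local Open Scope ring_scope.

Lemma v_ge0 (R : realType) (K : fieldType) (v : K -> R) :
  nonarch_abs v -> forall x, 0 <= v x.
Proof. by case. Qed.

Lemma v0 (R : realType) (K : fieldType) (v : K -> R) :
  nonarch_abs v -> v 0 = 0.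
Proof. by case=> _ h _ _; apply/h. Qed.

Lemma v1 (R : realType) (K : fieldType) (v : K -> R) :
  nonarch_abs v -> v 1 = 1.
Proof.
case=> _ h hm _. have := hm 1 1; rewrite mulr1 => e.
have nz : v 1 != 0 by apply/eqP; move/h/eqP; rewrite oner_eq0.
by apply: (mulfI nz); rewrite mulr1 -e.
Qed.

Lemma vM (R : realType) (K : fieldType) (v : K -> R) :
  nonarch_abs v -> forall x y, v (x * y) = v x * v y.
Proof. by case. Qed.

Lemma vN (R : realType) (K : fieldType) (v : K -> R) :
  nonarch_abs v -> forall x, v (- x) = v x.
Proof.
move=> hv x. have h1 : v (-1) = 1.
  have := vM hv (-1) (-1); rewrite mulrNN mulr1 (v1 hv) => e.
  have ge := v_ge0 hv (-1).
  have : (v (-1) - 1) * (v (-1) + 1) = 0 by rewrite -subr_sqr expr1n expr2 -e subrr.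
  move/eqP; rewrite mulf_eq0 => /orP[/eqP|/eqP] h.
    by apply/eqP; rewrite -subr_eq0 h.
  by exfalso; move: h => /eqP; rewrite paddr_eq0 // oner_eq0 andbF.
by rewrite -mulN1r vM // h1 mul1r.
Qed.

Lemma vD_le (R : realType) (K : fieldType) (v : K -> R) :
  nonarch_abs v -> forall x y B, v x <= B -> v y <= B -> v (x + y) <= B.
Proof.
case=> _ _ _ h x y B hx hy; apply: le_trans (h x y) _.
by rewrite ge_max hx hy.
Qed.

Lemma vD_lt (R : realType) (K : fieldType) (v : K -> R) :
  nonarch_abs v -> forall x y B, v x < B -> v y < B -> v (x + y) < B.
Proof.
case=> _ _ _ h x y B hx hy; apply: le_lt_trans (h x y) _.
by rewrite gt_max hx hy.
Qed.

Lemma vB_sym (R : realType) (K : fieldType) (v : K -> R) :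
  nonarch_abs v -> forall x y, v (x - y) = v (y - x).
Proof. by move=> hv x y; rewrite -opprB vN. Qed.

Lemma vsum_le (R : realType) (K : fieldType) (v : K -> R) (I : Type)
  (s : seq I) (P : pred I) (f : I -> K) B :
  nonarch_abs v -> 0 <= B -> (forall i, P i -> v (f i) <= B) ->
  v (\sum_(i <- s | P i) f i) <= B.
Proof.
move=> hv hB hf; apply: (big_ind (fun x => v x <= B)) => //.
  by rewrite v0.
by move=> x y; apply: vD_le.
Qed.

Lemma vnat (R : realType) (K : fieldType) (v : K -> R) :
  nonarch_abs v -> forall n : nat, v n%:R <= 1.
Proof.
move=> hv; elim=> [|n ih]; first by rewrite v0.
by rewrite -addn1 natrD; apply: vD_le => //; rewrite v1.
Qed.

Lemma vtri (R : realType) (K : fieldType) (v : K -> R) :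
  nonarch_abs v -> forall x y z B, v (x - y) <= B -> v (y - z) <= B -> v (x - z) <= B.
Proof.
move=> hv x y z B h1 h2; have -> : x - z = (x - y) + (y - z) by rewrite addrA subrK.
exact: vD_le.
Qed.

Definition closeK (R : realType) (K : fieldType) (v : K -> R) (d : R) (a b : K) :=
  [/\ v a <= 1, v b <= 1 & v (a - b) <= d].

Lemma closeKM (R : realType) (K : fieldType) (v : K -> R) d a b a' b' :
  nonarch_abs v -> 0 <= d ->
  closeK v d a b -> closeK v d a' b' -> closeK v d (a * a') (b * b').
Proof.
move=> hv hd [ha hb hab] [ha' hb' hab']; split.
- by rewrite vM // mulr_ile1 ?v_ge0.
- by rewrite vM // mulr_ile1 ?v_ge0.
have -> : a * a' - b * b' = a * (a' - b') + (a - b) * b'.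
  by rewrite mulrBr mulrBl addrA subrK.
apply: vD_le => //; rewrite vM //.
  by rewrite -[d]mul1r ler_pM ?v_ge0.
by rewrite -[d]mulr1 ler_pM ?v_ge0.
Qed.

Lemma closeKX (R : realType) (K : fieldType) (v : K -> R) d a b n :
  nonarch_abs v -> 0 <= d -> closeK v d a b -> closeK v d (a ^+ n) (b ^+ n).
Proof.
move=> hv hd h; elim: n => [|n ih].
  by rewrite !expr0; split; rewrite ?v1 ?subrr ?v0.
by rewrite !exprS; apply: closeKM.
Qed.

Lemma closeK_prod (R : realType) (K : fieldType) (v : K -> R) d (N : nat)
  (x y : 'I_N -> K) (m : 'X_{1.. N}) :
  nonarch_abs v -> 0 <= d -> (forall i, closeK v d (x i) (y i)) ->
  closeK v d (\prod_i x i ^+ m i) (\prod_i y i ^+ m i).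
Proof.
move=> hv hd h; apply: (big_ind2 (closeK v d)).
- by split; rewrite ?v1 ?subrr ?v0.
- by move=> ? ? ? ?; apply: closeKM.
by move=> i _; apply: closeKX.
Qed.

Lemma poly_est (R : realType) (K : fieldType) (v : K -> R) (N : nat)
  (P : {mpoly K[N]}) (B d : R) (x y : 'I_N -> K) :
  nonarch_abs v -> 0 <= B -> 0 <= d -> (forall m, v P@_m <= B) ->
  (forall i, closeK v d (x i) (y i)) ->
  v (P.@[x] - P.@[y]) <= B * d /\ v P.@[x] <= B.
Proof.
move=> hv hB hd hP hxy; split.
  rewrite !mevalE -sumrB; apply: vsum_le => //; first exact: mulr_ge0.
  move=> m _; rewrite -mulrBr vM //; apply: ler_pM; rewrite ?v_ge0 //.
  by case: (closeK_prod m hv hd hxy).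
rewrite mevalE; apply: vsum_le => // m _; rewrite vM //.
rewrite -[B]mulr1 ler_pM ?v_ge0 //.
have hxx : forall i, closeK v 0 (x i) (x i).
  by move=> i; case: (hxy i) => h1 _ _; split; rewrite ?subrr ?v0.
by case: (closeK_prod m hv (lexx 0) hxx).
Qed.

Lemma r0 (R : realType) (K : fieldType) (v : K -> R) (k : fieldType) (r : K -> k) :
  nonarch_abs v -> is_residue_map v r -> r 0 = 0.
Proof.
move=> hv [hD _ _ _ _]; have h0 : in_Ko v 0 by rewrite /in_Ko v0.
have := hD 0 0 h0 h0; rewrite addr0 => e.
by apply: (addrI (r 0)); rewrite addr0 -e.
Qed.

Definition rrel (R : realType) (K : fieldType) (v : K -> R) (k : fieldType) (r : K -> k)
  (a : K) (b : k) := v a <= 1 /\ r a = b.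

Lemma r_eval (R : realType) (K : fieldType) (v : K -> R) (k : fieldType) (r : K -> k)
  (N : nat) (P : {mpoly K[N]}) (x : 'I_N -> K) :
  nonarch_abs v -> is_residue_map v r -> poly_Ko v P -> point_Ko v x ->
  v P.@[x] <= 1 /\ r P.@[x] = (red_poly r P).@[fun i => r (x i)].
Proof.
move=> hv hr hP hx; have [hD hM h1 _ _] := hr.
rewrite /red_poly raddf_sum mevalE.
apply: (big_ind2 (rrel v r)).
- by split; rewrite ?v0 ?(r0 hv hr).
- by move=> a b a' b' [ha <-] [ha' <-]; split; [exact: vD_le | exact: hD].
move=> m _ /=; rewrite mevalZ mevalX.
have hp : rrel v r (\prod_i x i ^+ m i) (\prod_i r (x i) ^+ m i).
  apply: (big_ind2 (rrel v r)).
  - by split; rewrite ?v1.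
  - move=> a b a' b' [ha <-] [ha' <-]; split; last exact: hM.
    by rewrite vM // mulr_ile1 ?v_ge0.
  move=> i _; elim: (m i) => [|n [ih1 ih2]]; first by rewrite !expr0; split; rewrite ?v1.
  rewrite !exprS; split; last by rewrite hM // ih2.
  by rewrite vM // mulr_ile1 ?v_ge0 //; apply: hx.
case: hp => hp1 hp2; split; first by rewrite vM // mulr_ile1 ?v_ge0 //; apply: hP.
by rewrite hM // hp2.
Qed.

Lemma pow_est (R : realType) (K : fieldType) (v : K -> R) (p : nat) (d : R) (a b : K) :
  nonarch_abs v -> 0 <= d -> closeK v d a b ->
  v (a ^+ p - b ^+ p) <= d * Num.max (v p%:R) d.
Proof.
move=> hv hd [ha hb hab]; rewrite subrXX vM //.
apply: ler_pM; rewrite ?v_ge0 //.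
set c := b ^+ p.-1.
have eS : \sum_(i < p) a ^+ (p.-1 - i) * b ^+ i =
          \sum_(i < p) (a ^+ (p.-1 - i) * b ^+ i - c) + c *+ p.
  by rewrite sumrB sumr_const card_ord subrK.
rewrite eS; apply: vD_le => //.
  apply: vsum_le => //; first by rewrite le_max hd orbT.
  move=> i _; have -> : c = b ^+ (p.-1 - i) * b ^+ i.
    by rewrite -exprD subnK // -ltnS (leq_trans (ltn_ord i)) // leqSpred.
  have : closeK v d (a ^+ (p.-1 - i) * b ^+ i) (b ^+ (p.-1 - i) * b ^+ i).
    apply: closeKM => //; apply: closeKX => //.
    by split; rewrite // subrr v0.
  by case=> _ _ h; apply: le_trans h _; rewrite le_max lexx orbT.
rewrite -mulr_natr vM // le_max; apply/orP; left.
rewrite -[X in _ <= X]mul1r ler_pM ?v_ge0 //.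
have hbb : closeK v 0 b b by split; rewrite // subrr v0.
by case: (closeKX p.-1 hv (lexx 0) hbb).
Qed.

Definition closeN (R : realType) (K : fieldType) (v : K -> R) (N : nat) (d : R)
  (x y : 'I_N -> K) := forall i, closeK v d (x i) (y i).

Lemma contr (R : realType) (K : fieldType) (v : K -> R) (p N : nat)
  (F G : 'I_N -> {mpoly K[N]}) (w : K) (d d0 : R) (x y : 'I_N -> K) :
  nonarch_abs v -> (forall i, poly_Ko v (F i)) -> (forall i, poly_Ko v (G i)) ->
  v p%:R <= v w -> (forall i m, v ((F i - G i ^+ p)@_m) <= v w) ->
  0 <= d -> d <= d0 -> closeN v d x y ->
  closeN v (Num.max (v w) d0 * d) (polymap F x) (polymap F y).
Proof.
move=> hv hF hG hpw hFG hd hdd0 hxy i; rewrite /polymap.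
have hc : 0 <= Num.max (v w) d0 by rewrite le_max v_ge0.
have [_ hFx] := poly_est hv ler01 hd (hF i) hxy.
have hyy : closeN v 0 y y.
  by move=> j; case: (hxy j) => _ h _; split; rewrite // subrr v0.
have [_ hFy] := poly_est hv ler01 (lexx 0) (hF i) hyy.
split => //.
have e : forall z, (F i).@[z] = (G i).@[z] ^+ p + (F i - G i ^+ p).@[z].
  by move=> z; rewrite mevalB rmorphXn /= addrC subrK.
rewrite !e.
have -> : forall a b c e : K, a + b - (c + e) = (a - c) + (b - e).
  by move=> a b c e'; rewrite opprD addrACA.
apply: vD_le => //.
  have [h1 h2] := poly_est hv ler01 hd (hG i) hxy.
  have [_ h3] := poly_est hv ler01 (lexx 0) (hG i) hyy.
  rewrite mul1r in h1.
  apply: le_trans (pow_est p hv hd (And3 h2 h3 h1)) _.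
  rewrite mulrC; apply: ler_pM => //; first by rewrite le_max hd orbT.
  by rewrite ge_max !le_max hpw hdd0 !orbT.
have hw0 : 0 <= v w by apply: v_ge0.
have [h4 _] := poly_est hv hw0 hd (hFG i) hxy.
by apply: le_trans h4 _; rewrite ler_pM // le_max lexx.
Qed.

Lemma contr_iter (R : realType) (K : fieldType) (v : K -> R) (p N : nat)
  (F G : 'I_N -> {mpoly K[N]}) (w : K) (d d0 : R) (x y : 'I_N -> K) (j : nat) :
  nonarch_abs v -> (forall i, poly_Ko v (F i)) -> (forall i, poly_Ko v (G i)) ->
  v p%:R <= v w -> (forall i m, v ((F i - G i ^+ p)@_m) <= v w) ->
  v w <= 1 -> 0 <= d -> d <= d0 -> d0 <= 1 -> closeN v d x y ->
  closeN v (Num.max (v w) d0 ^+ j * d) (iter j (polymap F) x) (iter j (polymap F) y).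
Proof.
move=> hv hF hG hpw hFG hw1 hd hdd0 hd01 hxy.
have hc : 0 <= Num.max (v w) d0 by rewrite le_max v_ge0.
have hc1 : Num.max (v w) d0 <= 1 by rewrite ge_max hw1.
elim: j => [|j ih]; first by rewrite expr0 mul1r.
rewrite iterS exprS -mulrA.
apply: (contr hv hF hG hpw hFG) => //.
  by rewrite mulr_ge0 // exprn_ge0.
apply: le_trans hdd0.
by rewrite -[X in _ <= X]mul1r ler_pM // ?exprn_ge0 // exprn_ile1.
Qed.

Lemma bernoulli (R : realType) (h : R) (M : nat) :
  0 <= h -> 1 + M%:R * h <= (1 + h) ^+ M.
Proof.
move=> h0; elim: M => [|M ih]; first by rewrite mul0r addr0 expr0.
rewrite exprS -natr1 mulrDl mul1r.
apply: le_trans (_ : (1 + h) * (1 + M%:R * h) <= _); last first.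
  by rewrite ler_pM2l // ltr_wpDr.
rewrite mulrDl mul1r mulrDr mulr1 addrA addrAC [h + _]addrC addrA.
have := mulr_ge0 h0 (mulr_ge0 (ler0n _ M) h0); lra.
Qed.

Lemma small_pow (R : realType) (c D e : R) :
  0 <= c -> c < 1 -> 0 <= D -> 0 < e -> exists M : nat, c ^+ M * D < e.
Proof.
move=> c0 c1 D0 e0.
have [->|cn0] := eqVneq c 0; first by exists 1%N; rewrite expr1 mul0r.
have cp : 0 < c by rewrite lt_def cn0 c0.
set h := c^-1 - 1.
have hp : 0 < h by rewrite subr_gt0 invf_gt1.
have ehp : 0 < e * h by rewrite mulr_gt0.
have b0 : 0 <= D / (e * h) by rewrite divr_ge0 // ltW.
exists (Num.Def.archi_bound (D / (e * h))).
set M := Num.Def.archi_bound _.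
have hM := archi_boundP b0; rewrite -/M in hM.
have e1 : D < e * (M%:R * h).
  by rewrite mulrCA -ltr_pdivrMr // mulrC.
have e2 : e * (M%:R * h) <= e * (c^-1) ^+ M.
  rewrite ler_pM2l //; apply: le_trans (_ : 1 + M%:R * h <= _); first lra.
  have -> : c^-1 = 1 + h by rewrite /h addrC subrK.
  exact: bernoulli (ltW hp).
have cM : 0 < c ^+ M by rewrite exprn_gt0.
rewrite mulrC -ltr_pdivlMr // -exprVn.
exact: lt_le_trans e2.
Qed.

Definition distN (R : realType) (K : fieldType) (v : K -> R) (N : nat) (x y : 'I_N -> K) : R :=
  \big[Num.max/0]_i v (x i - y i).

Lemma distN_ub (R : realType) (K : fieldType) (v : K -> R) (N : nat) (x y : 'I_N -> K) i :
  v (x i - y i) <= distN v x y.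
Proof. by rewrite /distN (bigD1 i) //= le_max lexx. Qed.

Lemma distN_ge0 (R : realType) (K : fieldType) (v : K -> R) (N : nat) (x y : 'I_N -> K) :
  nonarch_abs v -> 0 <= distN v x y.
Proof.
move=> hv; rewrite /distN; apply: (big_ind (fun z => 0 <= z)) => //.
  by move=> a b ha hb; rewrite le_max ha.
by move=> i _; apply: v_ge0.
Qed.

Lemma distN_lt (R : realType) (K : fieldType) (v : K -> R) (N : nat) (x y : 'I_N -> K) t :
  0 < t -> (forall i, v (x i - y i) < t) -> distN v x y < t.
Proof.
move=> t0 h; rewrite /distN; apply: (big_ind (fun z => z < t)) => //.
by move=> a b ha hb; rewrite gt_max ha hb.
Qed.

Lemma distN_le (R : realType) (K : fieldType) (v : K -> R) (N : nat) (x y : 'I_N -> K) t :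
  0 <= t -> (forall i, v (x i - y i) <= t) -> distN v x y <= t.
Proof.
move=> t0 h; rewrite /distN; apply: (big_ind (fun z => z <= t)) => //.
by move=> a b ha hb; rewrite ge_max ha hb.
Qed.

Lemma rN (R : realType) (K : fieldType) (v : K -> R) (k : fieldType) (r : K -> k) a :
  nonarch_abs v -> is_residue_map v r -> v a <= 1 -> r (- a) = - r a.
Proof.
move=> hv hr ha; have [hD _ _ _ _] := hr.
have hna : in_Ko v (- a) by rewrite /in_Ko vN.
have := hD a (- a) ha hna; rewrite subrr (r0 hv hr) => /esym/eqP.
by rewrite addr_eq0 => /eqP ->; rewrite opprK.
Qed.

Lemma rB (R : realType) (K : fieldType) (v : K -> R) (k : fieldType) (r : K -> k) a b :
  nonarch_abs v -> is_residue_map v r -> v a <= 1 -> v b <= 1 -> r (a - b) = r a - r b.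
Proof.
move=> hv hr ha hb; have [hD _ _ _ _] := hr.
by rewrite hD // ?(rN hv hr) // /in_Ko vN.
Qed.

Lemma r_close (R : realType) (K : fieldType) (v : K -> R) (k : fieldType) (r : K -> k) a b :
  nonarch_abs v -> is_residue_map v r -> v a <= 1 -> v b <= 1 ->
  (r a = r b <-> v (a - b) < 1).
Proof.
move=> hv hr ha hb; have [_ _ _ h0 _] := hr.
have hab : in_Ko v (a - b) by apply: vD_le => //; rewrite vN.
rewrite -(h0 _ hab) (rB hv hr ha hb); split => [->|/eqP]; [by rewrite subrr | by rewrite subr_eq0 => /eqP].
Qed.

Lemma iter_Ko_red (R : realType) (K : fieldType) (v : K -> R) (k : fieldType) (r : K -> k)
  (N : nat) (F : 'I_N -> {mpoly K[N]}) (x : 'I_N -> K) (j : nat) :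
  nonarch_abs v -> is_residue_map v r -> (forall i, poly_Ko v (F i)) -> point_Ko v x ->
  point_Ko v (iter j (polymap F) x) /\
  (fun i => r (iter j (polymap F) x i)) =
     iter j (polymap (fun i => red_poly r (F i))) (fun i => r (x i)).
Proof.
move=> hv hr hF hx; elim: j => [|j [ih1 ih2]] //=.
rewrite -ih2; split.
  by move=> i; rewrite /polymap; case: (r_eval hv hr (hF i) ih1).
apply: functional_extensionality => i; rewrite /polymap.
by case: (r_eval hv hr (hF i) ih1).
Qed.

Lemma red_Ko (R : realType) (K : fieldType) (v : K -> R) (k : fieldType) (r : K -> k)
  (N : nat) (x : 'I_N -> K) :
  point_Ko v x -> red v r x = Some (fun i => r (x i)).
Proof.
move=> hx; rewrite /red; have -> // : [forall i, v (x i) <= 1].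
by apply/forallP => i; apply: hx.
Qed.

Lemma iter_mul (T : Type) (f : T -> T) (x : T) (n m : nat) :
  iter n f x = x -> iter (n * m) f x = x.
Proof.
move=> h; elim: m => [|m ih]; first by rewrite muln0.
by rewrite mulnS iterD ih h.
Qed.

Lemma per_Ko (R : realType) (K : fieldType) (v : K -> R) (N : nat)
  (F : 'I_N -> {mpoly K[N]}) (x : 'I_N -> K) :
  (forall x, ~ point_Ko v x ->
        ~ point_Ko v (polymap F x) /\ maxabs v x < maxabs v (polymap F x)) ->
  Per (polymap F) x -> point_Ko v x.
Proof.
move=> hF [n [n0 hn]].
have [/forallP h|h] := boolP [forall i, v (x i) <= 1]; first by move=> i; apply: h.
have nx : ~ point_Ko v x.
  by move=> hx; move/negP: h; apply; apply/forallP => i; apply: hx.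
have : forall j, ~ point_Ko v (iter j (polymap F) x) /\
                 maxabs v x <= maxabs v (iter j (polymap F) x).
  elim=> [|j [ih1 ih2]] //=; split; first by case: (hF _ ih1).
  by apply: le_trans ih2 _; apply: ltW; case: (hF _ ih1).
move=> hall; case: n n0 hn => // m _ hm.
have [ih1 ih2] := hall m.
have [_ lt] := hF _ ih1.
have := le_lt_trans ih2 lt; rewrite -iterS hm ltxx //.
Qed.

Unset Implicit Arguments.
Set Strict Implicit.

Theorem mainTheorem7 (R : realType) (K : fieldType) (p : nat) (v : K -> R)
    (k : fieldType) (r : K -> k) (N : nat) (F : 'I_N -> {mpoly K[N]}) :
  is_Cp p v ->
  is_residue_map v r ->
  restricted_lift p v F ->
  let Fbar := fun i => red_poly r (F i) in
  [/\ (forall x, Per (polymap F) x ->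
         exists y, red v r x = Some y /\ Per (polymap Fbar) y),
      (forall x1 x2, Per (polymap F) x1 -> Per (polymap F) x2 ->
         red v r x1 = red v r x2 -> x1 = x2) &
      (forall y, Per (polymap Fbar) y ->
         exists x, Per (polymap F) x /\ red v r x = Some y)].
Proof.
move=> [hp hchar halg hv [hcomp hvp hdense]] hr [hF [w [G [hpw hw1 hG hFG]]] hout] Fbar.
have hw1' : v w <= 1 := ltW hw1.
have hw0 : 0 <= v w := v_ge0 hv w.
split.
- move=> x hx; have hxK := per_Ko hout hx.
  exists (fun i => r (x i)); split; first exact: red_Ko.
  case: hx => n [n0 hn]; exists n; split => //.
  have [_ e] := iter_Ko_red n hv hr hF hxK.
  by rewrite /Fbar -e hn.
- move=> x1 x2 h1 h2 he.
  have hx1 := per_Ko hout h1; have hx2 := per_Ko hout h2.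
  rewrite !red_Ko // in he; case: he => he.
  have hlt : forall i, v (x1 i - x2 i) < 1.
    move=> i; apply/(r_close hv hr (hx1 i) (hx2 i)).
    exact: (congr1 (fun f => f i) he).
  set d0 := distN v x1 x2.
  have d0lt : d0 < 1 := distN_lt ltr01 hlt.
  have d0ge : 0 <= d0 := distN_ge0 _ _ hv.
  case: h1 => n1 [n1p e1]; case: h2 => n2 [n2p e2].
  have e1' := iter_mul n2 e1.
  have e2' : iter (n1 * n2) (polymap F) x2 = x2 by rewrite mulnC; exact: iter_mul.
  have hclose : closeN v d0 x1 x2.
    by move=> i; split; [exact: hx1 | exact: hx2 | exact: distN_ub].
  have := contr_iter (n1 * n2) hv hF hG hpw hFG hw1' d0ge (lexx d0) (ltW d0lt) hclose.
  rewrite e1' e2' => hc.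
  set c := Num.max (v w) d0 in hc.
  have c0 : 0 <= c by rewrite le_max hw0.
  have c1 : c < 1 by rewrite gt_max hw1 d0lt.
  have q0 : 0 <= c ^+ (n1 * n2) by rewrite exprn_ge0.
  have q1 : c ^+ (n1 * n2) < 1 by rewrite exprn_ilt1 // -lt0n muln_gt0 n1p.
  have d0le : d0 <= c ^+ (n1 * n2) * d0.
    by apply: distN_le; [rewrite mulr_ge0 | move=> i; case: (hc i)].
  have d00 : d0 = 0.
    apply/eqP; rewrite eq_le d0ge andbT; rewrite leNgt; apply/negP => hd.
    by move: d0le; rewrite leNgt gtr_pMl // q1.
  apply: functional_extensionality => i; apply/eqP; rewrite -subr_eq0; apply/eqP.
  have [_ hz _ _] := hv; apply: (proj1 (hz _)); apply/eqP; rewrite eq_le v_ge0 // andbT.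
  by rewrite -d00; apply: distN_ub.
move=> y [n [n0 hn]].
have [x0 hx0] : exists x0 : 'I_N -> K, forall i, in_Ko v (x0 i) /\ r (x0 i) = y i.
  by apply: (@fin_all_exists _ (fun _ => K) (fun i x => in_Ko v x /\ r x = y i)) => i; have [_ _ _ _ hs] := hr; exact: hs.
have hx0K : point_Ko v x0 by move=> i; case: (hx0 i).
have hx0r : (fun i => r (x0 i)) = y.
  by apply: functional_extensionality => i; case: (hx0 i).
set f := iter n (polymap F).
have fK : forall z, point_Ko v z -> point_Ko v (f z).
  by move=> z hz; case: (iter_Ko_red n hv hr hF hz).
have hfr : forall i, r (f x0 i) = y i.
  move=> i; have [_ e] := iter_Ko_red n hv hr hF hx0K.
  have := congr1 (fun g => g i) e; rewrite /= hx0r => ->.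
  by change (iter n (polymap Fbar) y i = y i); rewrite hn.
have hlt : forall i, v (f x0 i - x0 i) < 1.
  move=> i; apply/(r_close hv hr (fK _ hx0K i) (hx0K i)).
  by rewrite hfr; case: (hx0 i).
set d0 := distN v (f x0) x0.
have d0lt : d0 < 1 := distN_lt ltr01 hlt.
have d0ge : 0 <= d0 := distN_ge0 _ _ hv.
set c := Num.max (v w) d0.
have c0 : 0 <= c by rewrite le_max hw0.
have c1 : c < 1 by rewrite gt_max hw1 d0lt.
set q := c ^+ n.
have q0 : 0 <= q by rewrite exprn_ge0.
have q1 : q < 1 by rewrite exprn_ilt1 // -lt0n.
have fcontr : forall d a b, 0 <= d -> d <= d0 -> closeN v d a b ->
    closeN v (q * d) (f a) (f b).
  by move=> d a b hd hdd hab; apply: (contr_iter n hv hF hG hpw hFG hw1' hd hdd (ltW d0lt) hab).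
set u := fun m => iter m f x0.
have uK : forall m, point_Ko v (u m).
  by elim=> [|m ih] //=; apply: fK.
have qm0 : forall m, 0 <= q ^+ m * d0 by move=> m; rewrite mulr_ge0 // exprn_ge0.
have qmono : forall m j, q ^+ (m + j) * d0 <= q ^+ m * d0.
  move=> m j; rewrite exprD -mulrA ler_wpM2l ?exprn_ge0 //.
  by rewrite ler_piMl // exprn_ile1 // ltW.
have qle : forall m, q ^+ m * d0 <= d0.
  by move=> m; have := qmono 0%N m; rewrite expr0 mul1r.
have step : forall m, closeN v (q ^+ m * d0) (u m.+1) (u m).
  elim=> [|m ih].
    rewrite expr0 mul1r => i; split; [exact: uK 1%N i | exact: hx0K | exact: distN_ub].
  rewrite exprS -mulrA; apply: fcontr => //.
have tail : forall m j i, v (u (m + j)%N i - u m i) <= q ^+ m * d0.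
  move=> m; elim=> [|j ih] i.
    by rewrite addn0 subrr v0.
  rewrite addnS; apply: vtri hv _ _ _ _ _ (ih i).
  by case: (step (m + j)%N i) => _ _ h; apply: le_trans h (qmono _ _).
have [l hl] : exists l : 'I_N -> K, forall i e, 0 < e -> exists M, forall m, (M <= m)%N ->
    v (u m i - l i) < e.
  apply: (@fin_all_exists _ (fun _ => K) (fun i li => forall e, 0 < e -> exists M, forall m, (M <= m)%N -> v (u m i - li) < e)) => i.
  apply: hcomp => e e0.
  have [M hM] := small_pow q0 q1 d0ge e0.
  exists M => m m' hm hm'.
  have -> : u m i - u m' i = (u m i - u M i) + (u M i - u m' i) by rewrite addrA subrK.
  apply: vD_lt => //.
    by rewrite -(subnKC hm); apply: le_lt_trans (tail _ _ _) hM.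
  by rewrite vB_sym // -(subnKC hm'); apply: le_lt_trans (tail _ _ _) hM.
have lbound : forall m i, v (u m i - l i) <= q ^+ m * d0.
  move=> m i; rewrite leNgt; apply/negP => hab.
  have e0 : 0 < v (u m i - l i) - q ^+ m * d0 by rewrite subr_gt0.
  have [M hM] := hl i _ e0.
  have h1 := hM (m + M)%N (leq_addl _ _).
  have h2 := tail m M i.
  have E : u m i - l i = (u m i - u (m + M)%N i) + (u (m + M)%N i - l i)
    by rewrite addrA subrK.
  have : v (u m i - l i) < v (u m i - l i).
    rewrite {1}E; apply: vD_lt => //.
      by rewrite vB_sym //; apply: le_lt_trans h2 hab.
    by apply: lt_le_trans h1 _; have := qm0 m; lra.
  by rewrite ltxx.
have lK : point_Ko v l.
  move=> i; have -> : l i = x0 i - (x0 i - l i) by rewrite opprB addrC subrK.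
  apply: vD_le => //; first exact: hx0K.
  rewrite vN //; have := lbound 0%N i; rewrite expr0 mul1r => h.
  exact: le_trans h (ltW d0lt).
have lr : forall i, r (l i) = y i.
  move=> i; have [_ <-] := hx0 i; apply/(r_close hv hr (lK i) (hx0K i)).
  rewrite vB_sym //; have := lbound 0%N i; rewrite expr0 mul1r => h.
  exact: le_lt_trans h d0lt.
have ul : forall m, closeN v (q ^+ m * d0) (u m) l.
  by move=> m i; split; [exact: uK | exact: lK | exact: lbound].
have fix_b : forall m i, v (f l i - l i) <= q ^+ m.+1 * d0.
  move=> m i.
  have := fcontr _ _ _ (qm0 m) (qle m) (ul m) i; case=> _ _ h.
  have -> : f l i - l i = (f l i - u m.+1 i) + (u m.+1 i - l i) by rewrite addrA subrK.
  apply: vD_le => //; first by rewrite vB_sym // exprS -mulrA.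
have fix0 : forall i, f l i = l i.
  move=> i; apply/eqP; rewrite -subr_eq0; apply/eqP.
  have [_ hz _ _] := hv; apply: (proj1 (hz _)); apply/eqP; rewrite eq_le v_ge0 // andbT.
  rewrite leNgt; apply/negP => hpos.
  have qd0 : 0 <= q * d0 by rewrite mulr_ge0.
  have [M hM] := small_pow q0 q1 qd0 hpos.
  have := fix_b M i; rewrite exprSr -mulrA => h.
  by have := le_lt_trans h hM; rewrite ltxx.
exists l; split.
  by exists n; split => //; apply: functional_extensionality => i; apply: fix0.
rewrite red_Ko //; congr Some; apply: functional_extensionality => i; exact: lr.
Qed.
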